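(* Let $n\ge2$ be an integer that is not a perfect square, and let $a,b$ be positive rational numbers with $a^2-nb^2=-1$. Put $u=a+b\sqrt n$ and for $k\ge1$ write $u^k=a_k+b_k\sqrt n$ with $a_k,b_k\in\mathbb Q$. Then $$\mathcal L\left(\frac1{u^2}\right)=\sum_{k=1}^{\infty}\left[\mathcal L\left(\frac{1}{n(b_{2k}/a)^2}\right)+\mathcal L\left(\frac{1}{(a_{2k+1}/a)^2}\right)\right].$$ Moreover, if $a,b\in\mathbb Z$ then $b_{2k}/a\in\mathbb Z$ and $a_{2k+1}/a\in\mathbb Z$ for all $k\ge1$.
   Context: $\mathcal L$ is the Rogers dilogarithm: for real $z\le1$, $\mathcal L(z)=\mathrm{Li}_2(z)+\tfrac12\log|z|\log(1-z)$, where $\mathrm{Li}_2(z)=\sum_{m\ge1}z^m/m^2$. *)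

(* Defs.v *)
From Stdlib Require Import Reals QArith Qreals ZArith ClassicalEpsilon.
Open Scope R_scope.

Definition Li2_partial (z : R) (N : nat) : R :=
  sum_f_R0 (fun m => z ^ (S m) / (INR (S m)) ^ 2) N.

(* Li2(z) = sum_{m>=1} z^m/m^2 : the limit of the partial sums
   (well defined, i.e. the series converges, for |z| <= 1). *)
Definition Li2 (z : R) : R :=
  epsilon (inhabits 0) (fun l => Un_cv (Li2_partial z) l).

Definition RogersL (z : R) : R :=
  Li2 z + / 2 * ln (Rabs z) * ln (1 - z).

(* Main.v *)
Require Import Defs.
From Coquelicot Require Import Coquelicot.
From Stdlib Require Import Reals QArith Qreals ZArith Lra Lia ClassicalEpsilon Znumtheory.
Open Scope R_scope.

Lemma rad_ge1 (c : nat -> R) : (forall k, Rabs (c k) <= 1) ->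
  forall x, Rabs x < 1 -> Rbar_lt (Rabs x) (CV_radius c).
Proof.
  intros H x Hx. destruct (CV_radius_bounded c) as [Hub _].
  assert (H1 : Rbar_le 1 (CV_radius c)).
  { apply Hub. exists 1. intro n. rewrite pow1, Rmult_1_r. apply H. }
  destruct (CV_radius c); simpl in *; try lra; auto.
Qed.

Lemma const_on (f : R -> R) (a b : R) :
  (forall x, a < x < b -> is_derive f x 0) ->
  forall x y, a < x < b -> a < y < b -> f x = f y.
Proof.
  intros Hd x y Hx Hy.
  assert (Hin : forall z, Rmin x y <= z <= Rmax x y -> a < z < b).
  { intros z Hz. unfold Rmin, Rmax in Hz. destruct (Rle_dec x y); lra. }
  destruct (MVT_gen f x y (fun _ => 0)) as [c [Hc E]].
  - intros z Hz. apply Hd. apply Hin. lra.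
  - intros z Hz. apply continuity_pt_filterlim.
    apply (ex_derive_continuous f). exists 0. apply Hd. apply Hin. exact Hz.
  - lra.
Qed.

Definition ca (k : nat) : R := match k with O => 0 | S _ => / (INR k) ^ 2 end.
Definition cb (k : nat) : R := / INR (S k).

Lemma INRS_pos k : 0 < INR (S k).
Proof. apply lt_0_INR. lia. Qed.

Lemma INRS_ge1 k : 1 <= INR (S k).
Proof. rewrite S_INR. pose proof (pos_INR k). lra. Qed.

Lemma ca_bound k : Rabs (ca k) <= 1.
Proof.
  destruct k as [|k]; unfold ca.
  - rewrite Rabs_R0; lra.
  - pose proof (INRS_ge1 k).
    assert (1 <= INR (S k) ^ 2).
    { set (r := INR (S k)) in *. replace (r ^ 2) with (r * r) by ring. nra. }
    rewrite Rabs_pos_eq.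
    + rewrite <- Rinv_1. apply Rinv_le_contravar; lra.
    + apply Rlt_le, Rinv_0_lt_compat. lra.
Qed.

Lemma cb_bound k : Rabs (cb k) <= 1.
Proof.
  unfold cb. pose proof (INRS_ge1 k).
  rewrite Rabs_pos_eq.
  + rewrite <- Rinv_1. apply Rinv_le_contravar; lra.
  + apply Rlt_le, Rinv_0_lt_compat. lra.
Qed.

Lemma ca_derive : forall k, PS_derive ca k = cb k.
Proof.
  intro k. unfold PS_derive, ca, cb. pose proof (INRS_pos k). cbv iota beta. field. lra.
Qed.

Lemma geom_ps z : Rabs z < 1 -> PSeries (fun _ => 1) z = / (1 - z).
Proof.
  intro Hz. apply is_pseries_unique. apply is_pseries_R.
  apply is_series_ext with (fun n => z ^ n).
  - intro n. simpl. ring.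
  - apply is_series_geom. exact Hz.
Qed.

Lemma g_ln z : -1 < z < 1 -> z * PSeries cb z = - ln (1 - z).
Proof.
  intro Hz. rewrite <- PSeries_incr_1.
  set (h := fun x => PSeries (PS_incr_1 cb) x + ln (1 - x)).
  assert (Hh : forall x, -1 < x < 1 -> is_derive h x 0).
  { intros x Hx. unfold h.
    assert (Hr : Rbar_lt (Rabs x) (CV_radius (PS_incr_1 cb))).
    { apply rad_ge1.
      - intros [|k]; simpl. unfold zero; simpl; rewrite Rabs_R0; lra. apply cb_bound.
      - apply Rabs_def1; lra. }
    pose proof (is_derive_PSeries _ _ Hr) as H1.
    rewrite (PSeries_ext _ (fun _ => 1)) in H1.
    2:{ intro n. unfold PS_derive, PS_incr_1, cb. pose proof (INRS_pos n). field. lra. }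
    rewrite geom_ps in H1 by (apply Rabs_def1; lra).
    assert (H2 : is_derive (fun x => ln (1 - x)) x (- / (1 - x))).
    { auto_derive. lra. field. lra. }
    pose proof (is_derive_plus _ _ _ _ _ H1 H2) as H3.
    replace 0 with (plus (/ (1 - x)) (- / (1 - x))).
    exact H3. unfold plus; simpl. ring. }
  pose proof (const_on h (-1) 1 Hh z 0 Hz ltac:(lra)) as E.
  unfold h in E. rewrite PSeries_0 in E. simpl in E.
  replace (1 - 0) with 1 in E by ring. rewrite ln_1 in E.
  unfold zero in E; simpl in E. lra.
Qed.
Definition RL (z : R) : R := PSeries ca z + / 2 * ln z * ln (1 - z).
Definition LD (z : R) : R := - / 2 * (ln (1 - z) / z + ln z / (1 - z)).

Lemma RL_deriv z : 0 < z < 1 -> is_derive RL z (LD z).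
Proof.
  intro Hz.
  assert (Hr : Rbar_lt (Rabs z) (CV_radius ca)).
  { apply rad_ge1. apply ca_bound. apply Rabs_def1; lra. }
  pose proof (is_derive_PSeries _ _ Hr) as H1.
  rewrite (PSeries_ext _ cb) in H1 by apply ca_derive.
  assert (E : PSeries cb z = - ln (1 - z) / z).
  { apply Rmult_eq_reg_l with z; [|lra]. rewrite g_ln by lra. field. lra. }
  rewrite E in H1.
  assert (H2 : is_derive (fun z => / 2 * ln z * ln (1 - z)) z
                 (/ 2 * (/ z * ln (1 - z) - ln z * / (1 - z)))).
  { auto_derive. lra. replace (1 + - z) with (1 - z) by ring. field. lra. }
  pose proof (is_derive_plus _ _ _ _ _ H1 H2) as H3.
  unfold RL, LD. unfold plus in H3; simpl in H3.
  replace (- / 2 * (ln (1 - z) / z + ln z / (1 - z))) with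
    (- ln (1 - z) / z + / 2 * (/ z * ln (1 - z) - ln z * / (1 - z))).
  exact H3. field. lra.
Qed.

Lemma RL_cont y : 0 < y < 1 -> forall eps, eps > 0 ->
  exists d, d > 0 /\ forall z, Rabs (z - y) < d -> Rabs (RL z - RL y) < eps.
Proof.
  intros Hy eps He.
  assert (C : continuity_pt RL y).
  { apply continuity_pt_filterlim. apply (ex_derive_continuous RL).
    exists (LD y). apply RL_deriv; exact Hy. }
  unfold continuity_pt, continue_in, limit1_in, limit_in in C.
  destruct (C eps He) as [d [Hd Hz]].
  exists d. split; [exact Hd|]. intros z Hzy.
  destruct (Req_dec z y) as [->|Hne].
  - rewrite Rminus_diag, Rabs_R0. exact He.
  - apply (Hz z). split. split. exact I. auto. simpl. unfold R_dist. exact Hzy.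
Qed.

Lemma ln_le_m1 y : 0 < y -> ln y <= y - 1.
Proof.
  intro Hy. pose proof (exp_ineq1_le (ln y)). rewrite exp_ln in H by exact Hy. lra.
Qed.

Lemma log_small z : 0 < z <= / 2 -> Rabs (ln z * ln (1 - z)) <= 4 * sqrt z.
Proof.
  intro Hz.
  set (r := sqrt z).
  assert (Hr : 0 < r) by (apply sqrt_lt_R0; lra).
  assert (Hrr : r * r = z) by (apply sqrt_sqrt; lra).
  assert (L1 : ln z = 2 * ln r).
  { rewrite <- Hrr. rewrite ln_mult by lra. ring. }
  assert (L2 : - ln r <= / r).
  { rewrite <- ln_Rinv by lra. pose proof (ln_le_m1 (/ r) ltac:(apply Rinv_0_lt_compat; lra)). lra. }
  assert (L3 : ln z <= 0).
  { destruct (Req_dec z 1). lra. rewrite <- ln_1. apply Rlt_le, ln_increasing; lra. }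
  assert (L4 : ln (1 - z) <= 0).
  { rewrite <- ln_1. apply Rlt_le, ln_increasing; lra. }
  assert (L5 : - ln (1 - z) <= 2 * z).
  { assert (E : - ln (1 - z) = ln (/ (1 - z))) by (rewrite ln_Rinv; lra).
    rewrite E. pose proof (ln_le_m1 (/ (1 - z)) ltac:(apply Rinv_0_lt_compat; lra)).
    assert (/ (1 - z) - 1 <= 2 * z).
    { apply Rmult_le_reg_r with (1 - z). lra.
      rewrite Rmult_minus_distr_r, Rinv_l by lra. nra. }
    lra. }
  rewrite Rabs_pos_eq by nra.
  replace (ln z * ln (1 - z)) with ((2 * - ln r) * (- ln (1 - z))) by (rewrite L1; ring).
  assert (0 <= - ln r) by lra.
  assert (2 * - ln r * - ln (1 - z) <= 2 * / r * (2 * z)).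
  { apply Rmult_le_compat; nra. }
  replace (2 * / r * (2 * z)) with (4 * r) in H0. lra.
  rewrite <- Hrr. field. lra.
Qed.

Lemma RL_zero : forall eps, eps > 0 ->
  exists d, d > 0 /\ forall z, 0 < z < d -> Rabs (RL z) < eps.
Proof.
  intros eps He.
  assert (C : continuity_pt (PSeries ca) 0).
  { apply PSeries_continuity. apply rad_ge1. apply ca_bound. rewrite Rabs_R0; lra. }
  unfold continuity_pt, continue_in, limit1_in, limit_in in C.
  destruct (C (eps / 2) ltac:(lra)) as [d [Hd Hz]].
  rewrite PSeries_0 in Hz. simpl in Hz.
  exists (Rmin d (Rmin (/ 2) ((eps / 8) ^ 2))). split.
  { apply Rmin_pos. lra. apply Rmin_pos. lra. apply pow_lt. lra. }
  intros z [Hz0 Hzd].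
  pose proof (Rmin_l d (Rmin (/ 2) ((eps / 8) ^ 2))).
  pose proof (Rmin_r d (Rmin (/ 2) ((eps / 8) ^ 2))).
  pose proof (Rmin_l (/ 2) ((eps / 8) ^ 2)).
  pose proof (Rmin_r (/ 2) ((eps / 8) ^ 2)).
  assert (Hz1 : z < / 2) by lra. assert (Hz2 : z < (eps / 8) ^ 2) by lra.
  assert (Hzd' : z < d) by lra. clear Hzd. rename Hzd' into Hzd.
  assert (A : Rabs (PSeries ca z) < eps / 2).
  { pose proof (Hz z) as Hzz. simpl in Hzz. unfold R_dist in Hzz.
    rewrite !Rminus_0_r in Hzz. apply Hzz. split. split. exact I. lra.
    rewrite Rabs_pos_eq; lra. }
  assert (B : Rabs (ln z * ln (1 - z)) <= 4 * sqrt z) by (apply log_small; lra).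
  assert (S : sqrt z < eps / 8).
  { rewrite <- (sqrt_pow2 (eps / 8)) by lra. apply sqrt_lt_1; try lra. }
  unfold RL.
  replace (PSeries ca z + / 2 * ln z * ln (1 - z)) with
    (PSeries ca z + / 2 * (ln z * ln (1 - z))) by ring.
  eapply Rle_lt_trans. apply Rabs_triang.
  rewrite Rabs_mult. rewrite (Rabs_pos_eq (/ 2)) by lra. lra.
Qed.
Lemma div_le a b c : 0 < b -> a <= c * b -> a / b <= c.
Proof.
  intros Hb H. apply Rmult_le_reg_r with b; [lra|].
  unfold Rdiv. rewrite Rmult_assoc, Rinv_l by lra. lra.
Qed.

Lemma two_term z w : 0 < z < 1 -> 0 < w < 1 -> RL z + RL (1 - z) = RL w + RL (1 - w).
Proof.
  intros Hz Hw.
  apply (const_on (fun z => RL z + RL (1 - z)) 0 1); auto.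
  intros x Hx.
  assert (H1 := RL_deriv x Hx).
  assert (H2 : is_derive (fun x => RL (1 - x)) x (scal (-1) (LD (1 - x)))).
  { apply (is_derive_comp RL (fun x => 1 - x)). apply RL_deriv. lra. auto_derive. auto. ring. }
  pose proof (is_derive_plus _ _ _ _ _ H1 H2) as H3.
  replace 0 with (plus (LD x) (scal (-1) (LD (1 - x)))). exact H3.
  unfold plus, scal; simpl. unfold mult; simpl. unfold LD.
  replace (1 - (1 - x)) with x by ring. ring.
Qed.

Definition F5 (y x : R) : R :=
  RL x + RL y - RL (x * y) - RL (x * (1 - y) / (1 - x * y)) - RL (y * (1 - x) / (1 - x * y)).

Lemma F5_deriv y x : 0 < y < 1 -> 0 < x < 1 -> is_derive (F5 y) x 0.
Proof.
  intros Hy Hx.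
  assert (Hxy : 0 < x * y < 1) by (split; nra).
  assert (Hd : 0 < 1 - x * y) by lra.
  assert (Hu : 0 < x * (1 - y) / (1 - x * y) < 1).
  { split. apply Rdiv_lt_0_compat; nra.
    apply Rmult_lt_reg_r with (1 - x * y); [lra|]. unfold Rdiv.
    rewrite Rmult_assoc, Rinv_l by lra. nra. }
  assert (Hv : 0 < y * (1 - x) / (1 - x * y) < 1).
  { split. apply Rdiv_lt_0_compat; nra.
    apply Rmult_lt_reg_r with (1 - x * y); [lra|]. unfold Rdiv.
    rewrite Rmult_assoc, Rinv_l by lra. nra. }
  assert (D1 := RL_deriv x Hx).
  assert (D2 : is_derive (fun _ : R => RL y) x 0) by apply (@is_derive_const R_AbsRing R_NormedModule (RL y) x).
  assert (D3 : is_derive (fun x => RL (x * y)) x (scal y (LD (x * y)))).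
  { apply (is_derive_comp RL (fun x => x * y)). apply RL_deriv; lra. auto_derive. auto. ring. }
  assert (D4 : is_derive (fun x => RL (x * (1 - y) / (1 - x * y))) x
                 (scal ((1 - y) / (1 - x * y) ^ 2) (LD (x * (1 - y) / (1 - x * y))))).
  { apply (is_derive_comp RL (fun x => x * (1 - y) / (1 - x * y))). apply RL_deriv; lra. auto_derive. lra. field. lra. }
  assert (D5 : is_derive (fun x => RL (y * (1 - x) / (1 - x * y))) x
                 (scal (- y * (1 - y) / (1 - x * y) ^ 2) (LD (y * (1 - x) / (1 - x * y))))).
  { apply (is_derive_comp RL (fun x => y * (1 - x) / (1 - x * y))). apply RL_deriv; lra. auto_derive. lra. field. lra. }
  pose proof (is_derive_minus _ _ _ _ _ (is_derive_minus _ _ _ _ _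
     (is_derive_minus _ _ _ _ _ (is_derive_plus _ _ _ _ _ D1 D2) D3) D4) D5) as H.
  assert (E : forall t, F5 y t = minus (minus (minus (plus (RL t) (RL y)) (RL (t * y)))
                 (RL (t * (1 - y) / (1 - t * y)))) (RL (y * (1 - t) / (1 - t * y)))).
  { intro t. reflexivity. }
  eapply is_derive_ext. intro t. symmetry. apply E.
  replace 0 with (minus (minus (minus (plus (LD x) 0) (scal y (LD (x * y))))
        (scal ((1 - y) / (1 - x * y) ^ 2) (LD (x * (1 - y) / (1 - x * y)))))
        (scal (- y * (1 - y) / (1 - x * y) ^ 2) (LD (y * (1 - x) / (1 - x * y))))).
  exact H.
  unfold minus, plus, opp, scal; simpl. unfold mult; simpl. unfold LD.
  assert (Hu1 : 1 - x * (1 - y) / (1 - x * y) = (1 - x) / (1 - x * y)) by (field; lra).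
  assert (Hv1 : 1 - y * (1 - x) / (1 - x * y) = (1 - y) / (1 - x * y)) by (field; lra).
  rewrite Hu1, Hv1.
  assert (L1 : ln (x * (1 - y) / (1 - x * y)) = ln x + ln (1 - y) - ln (1 - x * y)).
  { rewrite ln_div, ln_mult; lra || nra. }
  assert (L2 : ln ((1 - x) / (1 - x * y)) = ln (1 - x) - ln (1 - x * y)).
  { rewrite ln_div; lra. }
  assert (L3 : ln (y * (1 - x) / (1 - x * y)) = ln y + ln (1 - x) - ln (1 - x * y)).
  { rewrite ln_div, ln_mult; lra || nra. }
  assert (L4 : ln ((1 - y) / (1 - x * y)) = ln (1 - y) - ln (1 - x * y)).
  { rewrite ln_div; lra. }
  assert (L5 : ln (x * y) = ln x + ln y) by (rewrite ln_mult; lra).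
  rewrite L1, L2, L3, L4, L5.
  generalize (ln x) (ln y) (ln (1 - x)) (ln (1 - y)) (ln (1 - x * y)).
  intros A B P Q S. field. repeat split; lra.
Qed.
Lemma F5_zero y x : 0 < y < 1 -> 0 < x < 1 -> F5 y x = 0.
Proof.
  intros Hy Hx.
  set (c := F5 y x).
  assert (Hc : forall x', 0 < x' < 1 -> F5 y x' = c).
  { intros x' Hx'. apply (const_on (F5 y) 0 1); auto. intros t Ht. apply F5_deriv; auto. }
  assert (Heps : forall eps, eps > 0 -> Rabs c < eps).
  { intros eps He.
    destruct (RL_zero (eps / 4) ltac:(lra)) as [d1 [Hd1 H1]].
    destruct (RL_cont y Hy (eps / 4) ltac:(lra)) as [d2 [Hd2 H2]].
    set (x' := Rmin (Rmin d1 d2) (/ 2) / 2).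
    assert (Hm : 0 < Rmin (Rmin d1 d2) (/ 2)).
    { apply Rmin_pos. apply Rmin_pos; lra. lra. }
    pose proof (Rmin_l (Rmin d1 d2) (/ 2)). pose proof (Rmin_r (Rmin d1 d2) (/ 2)).
    pose proof (Rmin_l d1 d2). pose proof (Rmin_r d1 d2).
    assert (Hx'0 : 0 < x') by (unfold x'; lra).
    assert (Hx'1 : x' < d1) by (unfold x'; lra).
    assert (Hx'2 : x' < d2) by (unfold x'; lra).
    assert (Hx'3 : x' < / 2) by (unfold x'; lra).
    clearbody x'.
    rewrite <- (Hc x') by lra.
    assert (Hd : 0 < 1 - x' * y) by nra.
    assert (Hu0 : 0 < x' * (1 - y) / (1 - x' * y)) by (apply Rdiv_lt_0_compat; nra).
    assert (Hu1 : x' * (1 - y) / (1 - x' * y) <= x').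
    { apply div_le; [lra|].
      assert (0 <= x' * y * (1 - x')) by (apply Rmult_le_pos; [apply Rmult_le_pos|]; lra).
      nra. }
    assert (Hv : Rabs (y * (1 - x') / (1 - x' * y) - y) <= x').
    { replace (y * (1 - x') / (1 - x' * y) - y) with (- (x' * y * (1 - y) / (1 - x' * y)))
        by (field; lra).
      rewrite Rabs_Ropp, Rabs_pos_eq.
      apply div_le; [lra|].
      assert (0 <= x' * (1 - x' * y - y * (1 - y))).
      { apply Rmult_le_pos; [lra|]. nra. }
      nra. apply Rlt_le, Rdiv_lt_0_compat; [|lra]. apply Rmult_lt_0_compat; [apply Rmult_lt_0_compat|]; lra. }
    pose proof (H1 x' ltac:(lra)) as A1.
    pose proof (H1 (x' * y) ltac:(split; nra)) as A2.
    pose proof (H1 (x' * (1 - y) / (1 - x' * y)) ltac:(lra)) as A3.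
    pose proof (H2 (y * (1 - x') / (1 - x' * y)) ltac:(lra)) as A4.
    apply Rabs_def2 in A1. apply Rabs_def2 in A2. apply Rabs_def2 in A3. apply Rabs_def2 in A4.
    unfold F5. apply Rabs_def1; lra. }
  destruct (Req_dec c 0) as [E|E]; auto.
  exfalso. pose proof (Heps (Rabs c) (Rabs_pos_lt c E)). lra.
Qed.

Lemma five_term x y : 0 < x < 1 -> 0 < y < 1 ->
  RL x + RL y = RL (x * y) + RL (x * (1 - y) / (1 - x * y)) + RL (y * (1 - x) / (1 - x * y)).
Proof.
  intros Hx Hy. pose proof (F5_zero y x Hy Hx). unfold F5 in H. lra.
Qed.
Section Tele.
Variable t : R.
Hypothesis Ht : 0 < t < 1.

Definition Xs (k : nat) : R := t ^ k * (1 - t) / (1 - t ^ (S k)).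
Definition Ys (k : nat) : R := (1 - t) / (1 - t ^ (S k)).
Definition Ts (k : nat) : R := t ^ k * (1 - t) ^ 2 / (1 - t ^ (S k)) ^ 2.

Lemma tk_bounds k : (1 <= k)%nat -> 0 < t ^ k < 1.
Proof.
  intro Hk. split. apply pow_lt; lra.
  apply pow_lt_1_compat. lra. lia.
Qed.

Lemma Xs_in k : (1 <= k)%nat -> 0 < Xs k < 1.
Proof.
  intro Hk. pose proof (tk_bounds k Hk). unfold Xs. change (t ^ S k) with (t * t ^ k).
  set (P := t ^ k) in *. assert (0 < 1 - t * P) by nra.
  split. apply Rdiv_lt_0_compat; nra.
  apply Rmult_lt_reg_r with (1 - t * P); [lra|]. unfold Rdiv.
  rewrite Rmult_assoc, Rinv_l by lra. nra.
Qed.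

Lemma Ys_in k : (1 <= k)%nat -> 0 < Ys k < 1.
Proof.
  intro Hk. pose proof (tk_bounds k Hk). unfold Ys. change (t ^ S k) with (t * t ^ k).
  set (P := t ^ k) in *. assert (0 < 1 - t * P) by nra.
  split. apply Rdiv_lt_0_compat; nra.
  apply Rmult_lt_reg_r with (1 - t * P); [lra|]. unfold Rdiv.
  rewrite Rmult_assoc, Rinv_l by lra. nra.
Qed.

Lemma Ts_in k : (1 <= k)%nat -> 0 < Ts k < 1.
Proof.
  intro Hk. pose proof (Xs_in k Hk). pose proof (Ys_in k Hk).
  replace (Ts k) with (Xs k * Ys k). split; nra.
  unfold Xs, Ys, Ts. change (t ^ S k) with (t * t ^ k).
  pose proof (tk_bounds k Hk). set (P := t ^ k) in *. field. nra.
Qed.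

Lemma step k : (1 <= k)%nat ->
  RL (Xs k) + RL (Ys k) = RL (Ts k) + RL (Xs (S k)) + RL (Ys (S k)).
Proof.
  intro Hk. rewrite (five_term (Xs k) (Ys k) (Xs_in k Hk) (Ys_in k Hk)).
  pose proof (tk_bounds k Hk).
  assert (E0 : 1 - Xs k * Ys k = (1 - t ^ k) * (1 - t * (t * t ^ k)) / (1 - t * t ^ k) ^ 2).
  { unfold Xs, Ys. change (t ^ S k) with (t * t ^ k). set (P := t ^ k) in *. field. nra. }
  assert (E1 : Xs k * Ys k = Ts k).
  { unfold Xs, Ys, Ts. change (t ^ S k) with (t * t ^ k). set (P := t ^ k) in *. field. nra. }
  assert (E2 : Xs k * (1 - Ys k) / (1 - Xs k * Ys k) = Xs (S k)).
  { rewrite E0. unfold Xs, Ys. change (t ^ S (S k)) with (t * (t * t ^ k)).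
    change (t ^ S k) with (t * t ^ k). set (P := t ^ k) in *.
    field. repeat split; nra. }
  assert (E3 : Ys k * (1 - Xs k) / (1 - Xs k * Ys k) = Ys (S k)).
  { rewrite E0. unfold Xs, Ys. change (t ^ S (S k)) with (t * (t * t ^ k)).
    change (t ^ S k) with (t * t ^ k). set (P := t ^ k) in *.
    field. repeat split; nra. }
  rewrite E2, E3, E1. reflexivity.
Qed.

Lemma tele N :
  sum_f_R0 (fun j => RL (Ts (2 * j + 1)) + RL (Ts (2 * j + 2))) N =
  RL (Xs 1) + RL (Ys 1) - RL (Xs (2 * N + 3)) - RL (Ys (2 * N + 3)).
Proof.
  induction N as [|N IH].
  - simpl sum_f_R0. pose proof (step 1 ltac:(lia)). pose proof (step 2 ltac:(lia)).
    simpl (2 * 0 + 1)%nat in *. simpl (2 * 0 + 2)%nat. simpl (2 * 0 + 3)%nat. lra.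
  - rewrite tech5, IH.
    replace (2 * S N + 1)%nat with (S (S (2 * N + 1)))%nat by lia.
    replace (2 * S N + 2)%nat with (S (S (S (2 * N + 1))))%nat by lia.
    replace (2 * S N + 3)%nat with (S (S (S (S (2 * N + 1)))))%nat by lia.
    replace (2 * N + 3)%nat with (S (S (2 * N + 1)))%nat by lia.
    pose proof (step (S (S (2 * N + 1))) ltac:(lia)).
    pose proof (step (S (S (S (2 * N + 1)))) ltac:(lia)). lra.
Qed.

Lemma base : RL (Xs 1) + RL (Ys 1) = RL t + RL (1 - t).
Proof.
  assert (E : Ys 1 = 1 - Xs 1).
  { unfold Xs, Ys. simpl. field. nra. }
  rewrite E. apply two_term. apply Xs_in; lia. exact Ht.
Qed.

Lemma main_t :
  Un_cv (fun N => sum_f_R0 (fun j => RL (Ts (2 * j + 1)) + RL (Ts (2 * j + 2))) N) (RL t).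
Proof.
  intros eps He.
  destruct (RL_zero (eps / 2) ltac:(lra)) as [d1 [Hd1 H1]].
  destruct (RL_cont (1 - t) ltac:(lra) (eps / 2) ltac:(lra)) as [d2 [Hd2 H2]].
  destruct (pow_lt_1_zero t ltac:(rewrite Rabs_pos_eq; lra) (Rmin d1 d2) ltac:(apply Rmin_pos; lra))
    as [N0 HN0].
  exists N0. intros N HN. unfold Rdist. rewrite tele.
  set (k := (2 * N + 3)%nat).
  assert (Hk : (1 <= k)%nat) by (unfold k; lia).
  pose proof (HN0 k ltac:(unfold k; lia)) as Hp.
  pose proof (tk_bounds k Hk) as Hb.
  rewrite Rabs_pos_eq in Hp by lra.
  pose proof (Rmin_l d1 d2). pose proof (Rmin_r d1 d2).
  pose proof (Xs_in k Hk) as HX.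
  assert (HX2 : Xs k <= t ^ k).
  { unfold Xs. change (t ^ S k) with (t * t ^ k). set (P := t ^ k) in *.
    assert (0 <= t * P * (1 - P)) by (apply Rmult_le_pos; [apply Rmult_le_pos|]; lra).
    apply div_le; nra. }
  assert (HY : Rabs (Ys k - (1 - t)) <= t ^ k).
  { unfold Ys. change (t ^ S k) with (t * t ^ k). set (P := t ^ k) in *.
    replace ((1 - t) / (1 - t * P) - (1 - t)) with ((1 - t) * (t * P) / (1 - t * P))
      by (field; nra).
    assert (0 <= P * (1 - t * P - t * (1 - t))) by (apply Rmult_le_pos; nra).
    rewrite Rabs_pos_eq. apply div_le; nra.
    apply Rlt_le, Rdiv_lt_0_compat; [apply Rmult_lt_0_compat; [lra| apply Rmult_lt_0_compat; lra] | nra]. }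
  pose proof (H1 (Xs k) ltac:(lra)) as A1.
  pose proof (H2 (Ys k) ltac:(lra)) as A2.
  apply Rabs_def2 in A1. apply Rabs_def2 in A2.
  pose proof base. apply Rabs_def1; lra.
Qed.
End Tele.
Section ZS.
Local Open Scope Z_scope.
Lemma Z_sq (p q n : Z) : 0 < q -> p * p = n * (q * q) -> exists m, n = m * m.
Proof.
  intros Hq E.
  set (g := Z.gcd p q).
  assert (Hg : 0 < g).
  { pose proof (Z.gcd_nonneg p q). assert (g <> 0).
    { intro H0. apply Z.gcd_eq_0 in H0. lia. } unfold g in *; lia. }
  destruct (Z.gcd_divide_l p q) as [p' Hp]. destruct (Z.gcd_divide_r p q) as [q' Hq'].
  fold g in Hp, Hq'.
  assert (G1 : Z.gcd p' q' = 1).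
  { assert (Ep : p / g = p') by (rewrite Hp; apply Z.div_mul; lia).
    assert (Eq : q / g = q') by (rewrite Hq'; apply Z.div_mul; lia).
    rewrite <- Ep, <- Eq. apply Z.gcd_div_gcd; unfold g; lia. }
  assert (E' : p' * p' = n * (q' * q')).
  { apply (Z.mul_reg_r _ _ (g * g)). nia. rewrite Hp, Hq' in E. nia. }
  assert (D : (q' | p')).
  { apply (Gauss q' p' p'). exists (n * q'). lia.
    apply Zgcd_1_rel_prime. rewrite Z.gcd_comm. exact G1. }
  assert (D1 : (q' | 1)).
  { rewrite <- G1. apply Z.gcd_greatest. exact D. apply Z.divide_refl. }
  apply Z.divide_1_r in D1.
  exists p'. destruct D1 as [-> | ->]; lia.
Qed.
End ZS.

Lemma Q2R_injZ z : Q2R (inject_Z z) = IZR z.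
Proof. unfold Q2R, inject_Z. simpl. field. Qed.

Lemma sqrt_irrat (n : nat) : ~ (exists m : nat, n = (m * m)%nat) ->
  forall r : Q, Q2R r <> sqrt (INR n).
Proof.
  intros Hns r Hr. apply Hns.
  destruct r as [p q]. unfold Q2R in Hr. simpl in Hr.
  assert (Hq : 0 < IZR (Z.pos q)) by (apply IZR_lt; lia).
  assert (E : IZR p * IZR p = INR n * (IZR (Z.pos q) * IZR (Z.pos q))).
  { assert (IZR p = sqrt (INR n) * IZR (Z.pos q)).
    { rewrite <- Hr. field. lra. }
    rewrite H. replace (sqrt (INR n) * IZR (Z.pos q) * (sqrt (INR n) * IZR (Z.pos q)))
      with ((sqrt (INR n) * sqrt (INR n)) * (IZR (Z.pos q) * IZR (Z.pos q))) by ring.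
    rewrite sqrt_sqrt. ring. apply pos_INR. }
  rewrite INR_IZR_INZ, <- !mult_IZR in E. apply eq_IZR in E.
  destruct (Z_sq p (Z.pos q) (Z.of_nat n) ltac:(lia) E) as [m Hm].
  exists (Z.to_nat (Z.abs m)).
  apply Nat2Z.inj. rewrite Nat2Z.inj_mul, Z2Nat.id by lia. rewrite Hm.
  rewrite <- Z.abs_mul. rewrite Z.abs_eq. reflexivity. apply Z.square_nonneg.
Qed.
Fixpoint ABq (a b nq : Q) (k : nat) : Q * Q :=
  match k with
  | O => (1%Q, 0%Q)
  | S k => ((a * fst (ABq a b nq k) + nq * (b * snd (ABq a b nq k)))%Q,
            (b * fst (ABq a b nq k) + a * snd (ABq a b nq k))%Q)
  end.

Fixpoint ABz (a b nz : Z) (k : nat) : Z * Z :=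
  match k with
  | O => (1%Z, 0%Z)
  | S k => ((a * fst (ABz a b nz k) + nz * (b * snd (ABz a b nz k)))%Z,
            (b * fst (ABz a b nz k) + a * snd (ABz a b nz k))%Z)
  end.

Lemma Q2R_1 : Q2R 1 = 1. Proof. unfold Q2R; simpl; field. Qed.
Lemma Q2R_0 : Q2R 0 = 0. Proof. unfold Q2R; simpl; field. Qed.

Lemma ABq_pow a b nq s : s * s = Q2R nq -> forall k,
  (Q2R a + Q2R b * s) ^ k = Q2R (fst (ABq a b nq k)) + Q2R (snd (ABq a b nq k)) * s /\
  (Q2R a - Q2R b * s) ^ k = Q2R (fst (ABq a b nq k)) - Q2R (snd (ABq a b nq k)) * s.
Proof.
  intros Hs k. induction k as [|k [IH1 IH2]].
  - simpl. rewrite Q2R_1, Q2R_0. split; ring.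
  - simpl (ABq a b nq (S k)). simpl fst. simpl snd.
    rewrite !Q2R_plus, !Q2R_mult. rewrite <- Hs.
    simpl pow. rewrite IH1, IH2. split; ring.
Qed.

Lemma ABz_eq a b nq za zb nz : Q2R a = IZR za -> Q2R b = IZR zb -> Q2R nq = IZR nz ->
  forall k, Q2R (fst (ABq a b nq k)) = IZR (fst (ABz za zb nz k)) /\
            Q2R (snd (ABq a b nq k)) = IZR (snd (ABz za zb nz k)).
Proof.
  intros Ha Hb Hn k. induction k as [|k [IH1 IH2]].
  - simpl. rewrite Q2R_1, Q2R_0. split; reflexivity.
  - simpl (ABq a b nq (S k)). simpl (ABz za zb nz (S k)). simpl fst. simpl snd.
    rewrite !Q2R_plus, !Q2R_mult, !plus_IZR, !mult_IZR. rewrite Ha, Hb, Hn, IH1, IH2.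
    split; reflexivity.
Qed.

Lemma ABz_div za zb nz : forall j,
  (za | snd (ABz za zb nz (2 * j)))%Z /\ (za | fst (ABz za zb nz (2 * j + 1)))%Z.
Proof.
  induction j as [|j [IH1 IH2]].
  - simpl. split. apply Z.divide_0_r. exists 1%Z. ring.
  - replace (2 * S j)%nat with (S (2 * j + 1))%nat by lia.
    replace (S (2 * j + 1) + 1)%nat with (S (S (2 * j + 1)))%nat by lia.
    simpl (ABz za zb nz (S (S (2 * j + 1)))). simpl (ABz za zb nz (S (2 * j + 1))).
    simpl fst; simpl snd.
    assert (D : (za | zb * fst (ABz za zb nz (2 * j + 1)) + za * snd (ABz za zb nz (2 * j + 1)))%Z).
    { apply Z.divide_add_r. apply Z.divide_mul_r. exact IH2. apply Z.divide_mul_l, Z.divide_refl. }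
    split. exact D.
    apply Z.divide_add_r. apply Z.divide_mul_l, Z.divide_refl.
    apply Z.divide_mul_r. apply Z.divide_mul_r. exact D.
Qed.

Lemma coeff_eq s (x1 y1 x2 y2 : Q) : (forall r : Q, Q2R r <> s) ->
  Q2R x1 + Q2R y1 * s = Q2R x2 + Q2R y2 * s -> Q2R x1 = Q2R x2 /\ Q2R y1 = Q2R y2.
Proof.
  intros Hirr E.
  destruct (Req_dec (Q2R y1) (Q2R y2)) as [Hy|Hy].
  - rewrite Hy in E. split; [lra|exact Hy].
  - exfalso. apply (Hirr ((x2 - x1) / (y1 - y2))%Q).
    assert (Hq : ~ (y1 - y2 == 0)%Q).
    { intro H. apply Qeq_eqR in H. rewrite Q2R_minus, Q2R_0 in H. lra. }
    rewrite Q2R_div by exact Hq. rewrite !Q2R_minus.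
    apply Rmult_eq_reg_r with (Q2R y1 - Q2R y2); [|lra].
    field_simplify; [|lra]. lra.
Qed.

Lemma ratio_form A X w p : 0 < w < 1 -> 0 < p < 1 -> A = (/ w - w) / 2 -> X = (/ p - p) / 2 ->
  1 / (X / A) ^ 2 = ((/ w - w) / (/ p - p)) ^ 2.
Proof.
  intros Hw Hp HA HX.
  assert (0 < / w - w).
  { assert (1 < / w). { rewrite <- Rinv_1. apply Rinv_lt_contravar; nra. } lra. }
  assert (0 < / p - p).
  { assert (1 < / p). { rewrite <- Rinv_1. apply Rinv_lt_contravar; nra. } lra. }
  rewrite HA, HX. field. repeat split; nra.
Qed.

Lemma ts_form w k : 0 < w < 1 -> (1 <= k)%nat ->
  Ts (w ^ 2) k = ((/ w - w) / (/ (w ^ S k) - w ^ S k)) ^ 2.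
Proof.
  intros Hw Hk. unfold Ts.
  assert (E1 : (w ^ 2) ^ k = (w ^ k) ^ 2).
  { rewrite <- !pow_mult. f_equal. lia. }
  assert (E2 : (w ^ 2) ^ S k = (w * w ^ k) ^ 2).
  { rewrite <- !pow_mult. change (w * w ^ k) with (w ^ S k). rewrite <- pow_mult. f_equal. lia. }
  rewrite E1, E2. change (w ^ S k) with (w * w ^ k).
  assert (Hq : 0 < w ^ k < 1) by (split; [apply pow_lt; lra | apply pow_lt_1_compat; lra || lia]).
  set (q := w ^ k) in *.
  assert (0 < w * q < 1) by (split; nra).
  assert (1 < / (w * q)). { rewrite <- Rinv_1. apply Rinv_lt_contravar; nra. }
  assert (1 < / w). { rewrite <- Rinv_1. apply Rinv_lt_contravar; nra. }
  assert (0 < 1 - (w * q) ^ 2). { simpl. nra. }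
  field. repeat split; try lra; nra.
Qed.
Lemma Li2_cv z : Rabs z < 1 -> Un_cv (Li2_partial z) (PSeries ca z).
Proof.
  intro Hz.
  pose proof (rad_ge1 ca ca_bound z Hz) as Hr.
  pose proof (PSeries_correct _ _ (CV_radius_inside _ _ Hr)) as H.
  apply is_pseries_R in H.
  assert (H' : is_lim_seq (sum_n (fun n => ca n * z ^ n)) (PSeries ca z)) by exact H.
  apply is_lim_seq_incr_1 in H'.
  apply is_lim_seq_Reals.
  apply is_lim_seq_ext with (2 := H').
  intro N. rewrite sum_n_Reals. rewrite decomp_sum by lia. simpl pred.
  unfold Li2_partial. simpl (ca 0). rewrite Rmult_0_l, Rplus_0_l.
  apply sum_eq. intros i _. unfold ca. field.
  pose proof (INRS_pos i). lra.
Qed.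

Lemma Li2_eq z : Rabs z < 1 -> Li2 z = PSeries ca z.
Proof.
  intro Hz. unfold Li2.
  apply (UL_sequence (Li2_partial z)).
  - apply (epsilon_spec (inhabits 0) (fun l => Un_cv (Li2_partial z) l)).
    exists (PSeries ca z). apply Li2_cv; exact Hz.
  - apply Li2_cv; exact Hz.
Qed.

Lemma RogersL_RL z : 0 < z < 1 -> RogersL z = RL z.
Proof.
  intro Hz. unfold RogersL, RL. rewrite Li2_eq by (apply Rabs_def1; lra).
  rewrite Rabs_pos_eq by lra. reflexivity.
Qed.

Theorem theorem3 (n : nat) (a b : Q) (ak bk : nat -> Q) :
  (2 <= n)%nat ->
  ~ (exists m : nat, n = (m * m)%nat) ->
  (0 < a)%Q -> (0 < b)%Q ->
  (a * a - inject_Z (Z.of_nat n) * (b * b) == -1)%Q ->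
  (forall k : nat, (1 <= k)%nat ->
     (Q2R a + Q2R b * sqrt (INR n)) ^ k = Q2R (ak k) + Q2R (bk k) * sqrt (INR n)) ->
  Un_cv
    (fun N => sum_f_R0 (fun j =>
        RogersL (1 / (INR n * (Q2R (bk (2 * (S j))%nat) / Q2R a) ^ 2))
      + RogersL (1 / (Q2R (ak (2 * (S j) + 1)%nat) / Q2R a) ^ 2)) N)
    (RogersL (1 / (Q2R a + Q2R b * sqrt (INR n)) ^ 2))
  /\
  ((exists za zb : Z, Q2R a = IZR za /\ Q2R b = IZR zb) ->
   forall k : nat, (1 <= k)%nat ->
     (exists z : Z, Q2R (bk (2 * k)%nat) / Q2R a = IZR z) /\
     (exists z : Z, Q2R (ak (2 * k + 1)%nat) / Q2R a = IZR z)).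
Proof.
  intros Hn Hns Ha Hb Hab Hpow.
  set (s := sqrt (INR n)) in *.
  set (nq := inject_Z (Z.of_nat n)) in *.
  assert (HnR : 2 <= INR n) by (replace 2 with (INR 2) by (simpl; ring); apply le_INR; exact Hn).
  assert (Hss : s * s = INR n) by (apply sqrt_sqrt; lra).
  assert (Hs0 : 0 < s) by (apply sqrt_lt_R0; lra).
  assert (Hnq : Q2R nq = INR n) by (unfold nq; rewrite Q2R_injZ, INR_IZR_INZ; reflexivity).
  assert (HA : 0 < Q2R a) by (rewrite <- Q2R_0; apply Qlt_Rlt; exact Ha).
  assert (HB : 0 < Q2R b) by (rewrite <- Q2R_0; apply Qlt_Rlt; exact Hb).
  assert (HabR : Q2R a * Q2R a - INR n * (Q2R b * Q2R b) = -1).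
  { apply Qeq_eqR in Hab. rewrite Q2R_minus, !Q2R_mult, Hnq in Hab. rewrite Hab.
    unfold Q2R; simpl; field. }
  set (A := Q2R a) in *. set (B := Q2R b) in *.
  assert (Hirr : forall r : Q, Q2R r <> s) by (apply sqrt_irrat; exact Hns).
  assert (Hconj : forall k, (1 <= k)%nat ->
     Q2R (ak k) = Q2R (fst (ABq a b nq k)) /\ Q2R (bk k) = Q2R (snd (ABq a b nq k))).
  { intros k Hk. apply (coeff_eq s); auto.
    rewrite <- Hpow by exact Hk.
    destruct (ABq_pow a b nq s ltac:(rewrite Hss, Hnq; reflexivity) k) as [F _]. exact F. }
  assert (Hu : forall k, (1 <= k)%nat ->
     Q2R (ak k) + Q2R (bk k) * s = (A + B * s) ^ k /\
     Q2R (ak k) - Q2R (bk k) * s = (A - B * s) ^ k).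
  { intros k Hk. destruct (Hconj k Hk) as [E1 E2]. rewrite E1, E2.
    destruct (ABq_pow a b nq s ltac:(rewrite Hss, Hnq; reflexivity) k) as [F1 F2].
    split; symmetry; assumption. }
  split.
  - set (w := B * s - A).
    assert (Huw : (A + B * s) * w = 1).
    { unfold w. replace ((A + B * s) * (B * s - A)) with (B * B * (s * s) - A * A) by ring.
      rewrite Hss. lra. }
    assert (Hw0 : 0 < w).
    { unfold w. assert (0 < B * s) by nra.
      assert ((B * s) * (B * s) = A * A + 1) by (replace ((B*s)*(B*s)) with (B*B*(s*s)) by ring; rewrite Hss; lra).
      nra. }
    assert (Hw1 : w < 1).
    { assert (A + B * s - w = 2 * A) by (unfold w; ring). nra. }
    assert (Huinv : A + B * s = / w) by (apply Rmult_eq_reg_r with w; [rewrite Rinv_l; lra | lra]).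
    assert (Hv : A - B * s = - w) by (unfold w; ring).
    assert (HAw : A = (/ w - w) / 2) by (rewrite <- Huinv; unfold w; field).
    set (t := w ^ 2).
    assert (Ht : 0 < t < 1) by (unfold t; simpl; split; nra).
    assert (Hpp : forall m, (1 <= m)%nat -> 0 < w ^ m < 1).
    { intros m Hm. split. apply pow_lt; lra. apply pow_lt_1_compat; lra || lia. }
    assert (Teven : forall j, 1 / (INR n * (Q2R (bk (2 * (S j))%nat) / A) ^ 2) = Ts t (2 * j + 1)).
    { intro j. unfold t. rewrite ts_form by (lra || lia).
      replace (S (2 * j + 1)) with (2 * S j)%nat by lia.
      destruct (Hu (2 * S j)%nat ltac:(lia)) as [E1 E2].
      rewrite Huinv, Hv, pow_inv in *.
      replace ((- w) ^ (2 * S j)) with (w ^ (2 * S j)) in E2.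
      2:{ replace (- w) with (-1 * w) by ring. rewrite Rpow_mult_distr, pow_1_even. ring. }
      assert (EE : INR n * (Q2R (bk (2 * S j)%nat) / A) ^ 2 =
        ((Q2R (bk (2 * S j)%nat) * s) / A) ^ 2).
      { rewrite <- Hss. field. lra. }
      rewrite EE.
      apply ratio_form. lra. apply Hpp; lia. exact HAw. lra. }
    assert (Todd : forall j, 1 / (Q2R (ak (2 * (S j) + 1)%nat) / A) ^ 2 = Ts t (2 * j + 2)).
    { intro j. unfold t. rewrite ts_form by (lra || lia).
      replace (S (2 * j + 2)) with (S (2 * S j))%nat by lia.
      replace (2 * S j + 1)%nat with (S (2 * S j))%nat by lia.
      destruct (Hu (S (2 * S j)) ltac:(lia)) as [E1 E2].
      rewrite Huinv, Hv, pow_inv in *.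
      replace ((- w) ^ (S (2 * S j))) with (- w ^ (S (2 * S j))) in E2.
      2:{ replace (- w) with (-1 * w) by ring. rewrite Rpow_mult_distr, pow_1_odd. ring. }
      apply ratio_form. lra. apply Hpp; lia. exact HAw. lra. }
    assert (Tmain : 1 / (A + B * s) ^ 2 = t).
    { rewrite Huinv, pow_inv. unfold t. field. lra. }
    rewrite Tmain, RogersL_RL by exact Ht.
    intros eps He. destruct (main_t t Ht eps He) as [N0 HN0].
    exists N0. intros N HN. specialize (HN0 N HN).
    replace (sum_f_R0 _ N) with
      (sum_f_R0 (fun j => RL (Ts t (2 * j + 1)) + RL (Ts t (2 * j + 2))) N).
    exact HN0.
    apply sum_eq. intros j _. rewrite Teven, Todd.
    rewrite !RogersL_RL by (apply Ts_in; (exact Ht || lia)). reflexivity.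
  - intros [za [zb [Hza Hzb]]] k Hk.
    assert (Hnz : Q2R nq = IZR (Z.of_nat n)) by (rewrite Hnq, INR_IZR_INZ; reflexivity).
    pose proof (ABz_eq a b nq za zb (Z.of_nat n) Hza Hzb Hnz) as HZ.
    destruct (ABz_div za zb (Z.of_nat n) k) as [D1 D2].
    fold A in Hza. rewrite Hza in *.
    split.
    + destruct D1 as [c Hc]. exists c.
      destruct (Hconj (2 * k)%nat ltac:(lia)) as [_ E]. rewrite E.
      destruct (HZ (2 * k)%nat) as [_ E']. rewrite E', Hc, mult_IZR. field. lra.
    + destruct D2 as [c Hc]. exists c.
      destruct (Hconj (2 * k + 1)%nat ltac:(lia)) as [E _]. rewrite E.
      destruct (HZ (2 * k + 1)%nat) as [E' _]. rewrite E', Hc, mult_IZR. field. lra.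
Qed.
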